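(* Let $\gamma\in(0,1]$, $\varsigma(t):=\gamma t^{\gamma-1}$, and $\bm\sigma:=\big(\varsigma(\tfrac1N),\dots,\varsigma(\tfrac{N-1}N)\big)/\varsigma(\tfrac1N)\in\mathbb R^{N-1}$. Let $\mathcal S:=\{\bm\Pi\in\mathbb R^{(N-1)\times(N-1)}:0\le\Pi_{ij}\le1\ \forall i,j,\ \bm\Pi\bm e=\bm e,\ \bm\Pi^\top\bm e=\bm e\}$ and let $\bm\Pi_i$ denote the $i$-th row of $\bm\Pi$. Consider: (P$_\sigma$) $\displaystyle\min_{\bm w\in\widehat{\mathcal V},\,\bm\Pi\in\mathcal S}\bm w^\top\bar{\bm g}$ s.t. $w_i-(\bm c_{[N-1]})_i\in[-(\bm\Pi_i\bm\sigma)\underline v_i,\,(\bm\Pi_i\bm\sigma)\bar v_i]$, $i\in[N-1]$; (L$_\sigma$) $\displaystyle\max\ \Big[\bm c_{[N-1]}^\top\bar{\bm g}-\bm\eta^\top\bm c_{[N-1]}+\sum_{m=1}^M\theta_mh_m\bm c_{[N-1]}^\top\bm\Delta^m+\min_{\bm\Pi\in\mathcal S}\sum_{i=1}^{N-1}(\bm\Pi_i\bm\sigma)\big(-(\underline\lambda_i\underline v_i+\bar\lambda_i\bar v_i)\big)\Big]$ over $(\underline{\bm\lambda},\bar{\bm\lambda},\beta,\bm\eta,\bm\theta)\in\mathbb R^{N-1}\times\mathbb R^{N-1}\times\mathbb R\times\mathbb R^{N-1}\times\mathbb R^M$ with $\bar{\bm g}-\underline{\bm\lambda}+\bar{\bm\lambda}+\beta\bm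 e-\bm\eta+\sum_{m=1}^M\theta_mh_m\bm\Delta^m=\bm 0$ and $\underline{\bm\lambda},\bar{\bm\lambda},\bm\eta,\bm\theta\ge0$; (D$_\sigma$) $\displaystyle\max\ \bm c_{[N-1]}^\top\bar{\bm g}+\sum_{m=1}^M\theta_mh_m\bm c_{[N-1]}^\top\bm\Delta^m-\bm\eta^\top\bm c_{[N-1]}-\sum_{i,j}\Theta_{ij}-\underline{\bm\tau}^\top\bm e-\bar{\bm\tau}^\top\bm e$ over $\underline{\bm\lambda},\bar{\bm\lambda},\bm\eta,\underline{\bm\tau},\bar{\bm\tau}\in\mathbb R^{N-1}$, $\beta\in\mathbb R$, $\bm\theta\in\mathbb R^M$, $\bm\Theta\in\mathbb R^{(N-1)\times(N-1)}$ subject to $\bar{\bm g}-\underline{\bm\lambda}+\bar{\bm\lambda}+\beta\bm e-\bm\eta+\sum_{m=1}^M\theta_mh_m\bm\Delta^m=\bm 0$, $(-\underline{\bm\lambda}\circ\underline{\bm v}-\bar{\bm\lambda}\circ\bar{\bm v})\bm\sigma^\top+\underline{\bm\tau}\bm e^\top+\bm e\bar{\bm\tau}^\top+\bm\Theta\ge0$ (entrywise, $\circ$ the Hadamard product), $\underline{\bm\lambda},\bar{\bm\lambda},\bm\eta,\bm\theta,\bm\Theta\ge0$. Then (P$_\sigma$) and (L$_\sigma$) can both be reformulated as (D$_\sigma$): their optimal values coincide with the optimal value of (D$_\sigma$).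
   Context: Let $N\ge3$ be an integer and $\underline x=x_1<x_2<\cdots<x_N=\bar x$ real numbers; $\bm e$ denotes the all-ones vector of the appropriate dimension. Define $\bm g:[\underline x,\bar x]\to\mathbb R^{N-1}$ by $\bm g(x_1)=\bm 0$ and, for $x\in(x_i,x_{i+1}]$ ($i\in\{1,\dots,N-1\}$), $\bm g(x)=(1,\dots,1,\frac{x-x_i}{x_{i+1}-x_i},0,\dots,0)$ with the first $i-1$ entries equal to $1$, the $i$-th entry $\frac{x-x_i}{x_{i+1}-x_i}$ and the last $N-1-i$ entries $0$. For $\bm v\in\mathbb R^{N-2}$ let $\bm R\bm v:=(v_1,\dots,v_{N-2},1-\bm e^\top\bm v)\in\mathbb R^{N-1}$. Let $\bm z\in\mathbb R^n$ and $\bm\xi^1,\dots,\bm\xi^K\in\mathbb R^n$ with $\bm z^\top\bm\xi^k\in[\underline x,\bar x]$ (the distribution of $\bm\xi$ puts mass $1/K$ on each $\bm\xi^k$), and $\bar{\bm g}:=\frac1K\sum_{k=1}^K\bm g(\bm z^\top\bm\xi^k)$. Let $M\ge1$ and, for $m=1,\dots,M$, let $r_1^m\le r_3^m$ and $r_2^m$ lie in $[\underline x,\bar x]$, $p^m\in[0,1]$, $h_m\in\{-1,1\}$, and $\bm\Delta^m:=(1-p^m)\bm g(r_1^m)+p^m\bm g(r_3^m)-\bm g(r_2^m)$. Let $\mathcal V:=\{\bm v\in\mathbb R^{N-2}:\bm v\ge0,\ \bm e^\top\bm v\le1,\ h_m(\bm R\bm v)^\top\bm\Delta^m\le0,\ m\in[M]\}$,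 assumed to have nonempty interior, let $\bm c\in\mathbb R^{N-2}$ be its analytic center (maximizer over the interior of the sum of the logarithms of the slacks of the defining inequalities) and $\bm c_{[N-1]}:=\bm R\bm c$ (so $\bm e^\top\bm c_{[N-1]}=1$). For $i\in[N-1]$ let $\underline v_i:=-\min\{(\bm R\bm v)_i-(\bm c_{[N-1]})_i:\bm v\in\mathcal V\}$ and $\bar v_i:=\max\{(\bm R\bm v)_i-(\bm c_{[N-1]})_i:\bm v\in\mathcal V\}$; $\underline{\bm v}=(\underline v_i)$, $\bar{\bm v}=(\bar v_i)$. Let $\widehat{\mathcal V}:=\{\bm w\in\mathbb R^{N-1}_+:\bm e^\top\bm w=1,\ h_m\bm w^\top\bm\Delta^m\le0,\ m\in[M]\}$. Optimal values are understood in the extended reals. *)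

(* Defs.v *)
From HB Require Import structures.
From mathcomp Require Import all_boot all_order all_algebra.
From mathcomp Require Import all_classical all_reals all_analysis.
Set Implicit Arguments. Unset Strict Implicit. Unset Printing Implicit Defensive.
Import Order.TTheory GRing.Theory Num.Theory.
Local Open Scope classical_set_scope.
Local Open Scope ring_scope.

Section Defs.
Variable R : realType.

Definition sumv n (a : 'I_n -> R) : R := \sum_(i < n) a i.
Definition dotv n (a b : 'I_n -> R) : R := \sum_(i < n) a i * b i.

(* Breakpoints x_1 < ... < x_N are x 0 < ... < x (N-1) (0-based).
   gidx N x t = i (0-based) such that t lies in (x_i, x_{i+1}]. *)
Definition gidx (N : nat) (x : nat -> R) (t : R) : nat :=
  (\sum_(k < N) nat_of_bool (x k < t)%R)%N.-1.

(* g(t) = (1,...,1, (t - x_i)/(x_{i+1} - x_i), 0, ..., 0), with g(x_1) = 0 *)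
Definition gvec (N : nat) (x : nat -> R) (t : R) : 'I_N.-1 -> R :=
  fun j => if t <= x 0%N then 0 else
    let i := gidx N x t in
    if (val j < i)%N then 1
    else if (val j == i) then (t - x i) / (x i.+1 - x i) else 0.

(* R v = (v_1, ..., v_{N-2}, 1 - e^T v) *)
Definition Rmap (N : nat) (v : 'I_N.-2 -> R) : 'I_N.-1 -> R :=
  fun i => if (insub (val i) : option 'I_N.-2) is Some j then v j
           else 1 - sumv v.

Definition Delta (N : nat) (x : nat -> R) (M : nat)
  (p r1 r2 r3 : 'I_M -> R) (m : 'I_M) : 'I_N.-1 -> R :=
  fun j => (1 - p m) * @gvec N x (r1 m) j + p m * @gvec N x (r3 m) j
           - @gvec N x (r2 m) j.

(* the polytope V in R^{N-2}; D m plays the role of Delta^m *)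
Definition Vset (N M : nat) (h : 'I_M -> R) (D : 'I_M -> 'I_N.-1 -> R)
  : set ('I_N.-2 -> R) :=
  [set v | (forall i, 0 <= v i) /\ sumv v <= 1 /\
           (forall m, h m * dotv (Rmap v) (D m) <= 0)].

Definition nonempty_interior n (A : set ('I_n -> R)) : Prop :=
  exists v0 : 'I_n -> R, exists2 eps : R, 0 < eps &
    forall v, (forall i, `|v i - v0 i| < eps) -> A v.

Definition strictV (N M : nat) (h : 'I_M -> R) (D : 'I_M -> 'I_N.-1 -> R)
  (v : 'I_N.-2 -> R) : Prop :=
  (forall i, 0 < v i) /\ sumv v < 1 /\
  (forall m, h m * dotv (Rmap v) (D m) < 0).

Definition logbarrier (N M : nat) (h : 'I_M -> R) (D : 'I_M -> 'I_N.-1 -> R)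
  (v : 'I_N.-2 -> R) : R :=
  \sum_(i < N.-2) ln (v i) + ln (1 - sumv v) +
  \sum_(m < M) ln (- (h m * dotv (Rmap v) (D m))).

Definition is_analytic_center (N M : nat) (h : 'I_M -> R)
  (D : 'I_M -> 'I_N.-1 -> R) (c : 'I_N.-2 -> R) : Prop :=
  strictV h D c /\
  (forall v, strictV h D v -> logbarrier h D v <= logbarrier h D c).

Definition vlow (N M : nat) (h : 'I_M -> R) (D : 'I_M -> 'I_N.-1 -> R)
  (c : 'I_N.-2 -> R) (i : 'I_N.-1) : R :=
  - inf [set Rmap v i - Rmap c i | v in Vset h D].
Definition vup (N M : nat) (h : 'I_M -> R) (D : 'I_M -> 'I_N.-1 -> R)
  (c : 'I_N.-2 -> R) (i : 'I_N.-1) : R :=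
  sup [set Rmap v i - Rmap c i | v in Vset h D].

Definition hatV (N M : nat) (h : 'I_M -> R) (D : 'I_M -> 'I_N.-1 -> R)
  : set ('I_N.-1 -> R) :=
  [set w | (forall i, 0 <= w i) /\ sumv w = 1 /\
           (forall m, h m * dotv w (D m) <= 0)].

Definition Sset n : set ('I_n -> 'I_n -> R) :=
  [set P | (forall i j, 0 <= P i j <= 1) /\
           (forall i, \sum_(j < n) P i j = 1) /\
           (forall j, \sum_(i < n) P i j = 1)].

Definition varsigma (gamma t : R) : R := gamma * t `^ (gamma - 1).

Definition sigmav (N : nat) (gamma : R) : 'I_N.-1 -> R :=
  fun j => varsigma gamma ((val j).+1%:R / N%:R) / varsigma gamma (1 / N%:R).

Definition rowdot n (P : 'I_n -> 'I_n -> R) (s : 'I_n -> R) (i : 'I_n) : R :=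
  \sum_(j < n) P i j * s j.

Local Open Scope ereal_scope.

Definition Pval (N M : nat) (h : 'I_M -> R) (D : 'I_M -> 'I_N.-1 -> R)
  (gbar cN vl vu s : 'I_N.-1 -> R) : \bar R :=
  ereal_inf [set y | exists w P, hatV h D w /\ Sset P /\
     (forall i, (- (rowdot P s i * vl i) <= w i - cN i
                 <= rowdot P s i * vu i)%R) /\
     y = (dotv w gbar)%:E].

Definition eqcons (N M : nat) (h : 'I_M -> R) (D : 'I_M -> 'I_N.-1 -> R)
  (gbar ll lu : 'I_N.-1 -> R) (beta : R) (eta : 'I_N.-1 -> R)
  (theta : 'I_M -> R) : Prop :=
  forall i, (gbar i - ll i + lu i + beta - eta i
             + \sum_(m < M) theta m * h m * D m i = 0)%R.

Definition Lval (N M : nat) (h : 'I_M -> R) (D : 'I_M -> 'I_N.-1 -> R)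
  (gbar cN vl vu s : 'I_N.-1 -> R) : \bar R :=
  ereal_sup [set y | exists (ll lu : 'I_N.-1 -> R) (beta : R)
       (eta : 'I_N.-1 -> R) (theta : 'I_M -> R),
     eqcons h D gbar ll lu beta eta theta /\
     (forall i, 0 <= ll i)%R /\ (forall i, 0 <= lu i)%R /\
     (forall i, 0 <= eta i)%R /\ (forall m, 0 <= theta m)%R /\
     y = (dotv cN gbar - dotv eta cN
          + \sum_(m < M) theta m * h m * dotv cN (D m))%:E
         + ereal_inf [set (\sum_(i < N.-1)
                             rowdot P s i * (- (ll i * vl i + lu i * vu i)))%:E
                     | P in @Sset N.-1]].

Definition Dval (N M : nat) (h : 'I_M -> R) (D : 'I_M -> 'I_N.-1 -> R)
  (gbar cN vl vu s : 'I_N.-1 -> R) : \bar R :=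
  ereal_sup [set y | exists (ll lu eta taul tauu : 'I_N.-1 -> R) (beta : R)
       (theta : 'I_M -> R) (Theta : 'I_N.-1 -> 'I_N.-1 -> R),
     eqcons h D gbar ll lu beta eta theta /\
     (forall i j, 0 <= (- (ll i * vl i) - lu i * vu i) * s j
                       + taul i + tauu j + Theta i j)%R /\
     (forall i, 0 <= ll i)%R /\ (forall i, 0 <= lu i)%R /\
     (forall i, 0 <= eta i)%R /\ (forall m, 0 <= theta m)%R /\
     (forall i j, 0 <= Theta i j)%R /\
     y = (dotv cN gbar + \sum_(m < M) theta m * h m * dotv cN (D m)
          - dotv eta cN - \sum_(i < N.-1) \sum_(j < N.-1) Theta i j
          - sumv taul - sumv tauu)%:E].

End Defs.

(* Main.v *)
Require Import Defs.
From HB Require Import structures.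
From mathcomp Require Import all_boot all_order all_algebra.
From mathcomp Require Import all_classical all_reals all_analysis.
From mathcomp Require Import lra ring.
From Stdlib Require Import Classical.
Import Order.TTheory GRing.Theory Num.Theory.
Local Open Scope classical_set_scope.
Local Open Scope ring_scope.
Set Implicit Arguments. Unset Strict Implicit. Unset Printing Implicit Defensive.

Section Farkas.
Variable R : realFieldType.
Variables (V C : finType) (A : C -> V -> R) (bv : C -> R).

Definition cstr := ((V -> R) * R)%type.
Definition sat (x : V -> R) (c : cstr) := \sum_u c.1 u * x u <= c.2.
Definition cone_ok (c : cstr) := exists y : C -> R, (forall k, 0 <= y k) /\
  (forall v, c.1 v = \sum_k y k * A k v) /\ c.2 = \sum_k y k * bv k.

Definition ccomb (al be : R) (c1 c2 : cstr) : cstr :=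
  (fun v => al * c1.1 v + be * c2.1 v, al * c1.2 + be * c2.2).
Definition c0 : cstr := (fun _ => 0, 0).

Lemma cone_c0 : cone_ok c0.
Proof.
exists (fun _ => 0); split => [k|]; first by [].
by split => [v|] /=; rewrite big1 // => k _; rewrite mul0r.
Qed.

Lemma cone_comb al be c1 c2 : 0 <= al -> 0 <= be -> cone_ok c1 -> cone_ok c2 ->
  cone_ok (ccomb al be c1 c2).
Proof.
move=> ha hb [y1 [y1p [y1a y1b]]] [y2 [y2p [y2a y2b]]].
exists (fun k => al * y1 k + be * y2 k); split => [k|].
  by apply: addr_ge0; apply: mulr_ge0.
split => [v|] /=.
  rewrite y1a y2a !mulr_sumr -big_split /=; apply: eq_bigr => k _; lra.
rewrite y1b y2b !mulr_sumr -big_split /=; apply: eq_bigr => k _; lra.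
Qed.

Lemma interpol (ls us : seq R) : (forall a b, a \in ls -> b \in us -> a <= b) ->
  exists t, (forall a, a \in ls -> a <= t) /\ (forall b, b \in us -> t <= b).
Proof.
elim: ls => [|a ls IH] H.
  elim: us {H} => [|u us [t [_ Ht]]]; first by exists 0.
  exists (Num.min u t); split => // b; rewrite inE => /orP [/eqP ->|/Ht hb].
    by rewrite ge_min lexx.
  by rewrite ge_min hb orbT.
have [t [Ht1 Ht2]] : exists t, (forall a, a \in ls -> a <= t) /\ (forall b, b \in us -> t <= b).
  by apply: IH => a' b' ha hb; apply: H => //; rewrite inE ha orbT.
exists (Num.max a t); split => [a'|b' hb].
  rewrite inE => /orP [/eqP ->|/Ht1 h]; first by rewrite le_max lexx.
  by rewrite le_max h orbT.
by rewrite ge_max Ht2 // andbT; apply: H => //; rewrite inE eqxx.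
Qed.

Definition upd (x : V -> R) v t := fun u => if u == v then t else x u.

Lemma dot_upd (a x : V -> R) v t :
  \sum_u a u * upd x v t u = \sum_u a u * x u + a v * (t - x v).
Proof.
rewrite (bigD1 v) //= [in RHS](bigD1 v) //= /upd eqxx.
have -> : \sum_(i | i != v) a i * (if i == v then t else x i) =
          \sum_(i | i != v) a i * x i.
  by apply: eq_bigr => i /negbTE ->.
lra.
Qed.

Lemma FM (s : seq V) : forall (I : finType) (L : I -> cstr),
  (forall i, cone_ok (L i)) -> (forall i v, v \notin s -> (L i).1 v = 0) ->
  ~ (exists x, forall i, sat x (L i)) ->
  exists bb, bb < 0 /\ cone_ok ((fun _ => 0), bb).
Proof.
elim: s => [|v s IH] I L Hc Hs Hinf.
  have : ~ (forall i, sat (fun _ => 0) (L i)) by move=> H; apply: Hinf; exists (fun _ => 0).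
  move/Classical_Pred_Type.not_all_ex_not => [i Hi].
  exists (L i).2; split.
    by rewrite ltNge; apply/negP => H; apply: Hi; rewrite /sat big1 // => u _; rewrite mulr0.
  have [y [yp [ya yb]]] := Hc i.
  by exists y; split => //; split => // u; rewrite -ya Hs.
pose L' (j : (I + I * I)%type) : cstr :=
  match j with
  | inl i => if (L i).1 v == 0 then L i else c0
  | inr pq => if (0 < (L pq.1).1 v) && ((L pq.2).1 v < 0) then
                ccomb (- (L pq.2).1 v) ((L pq.1).1 v) (L pq.1) (L pq.2) else c0
  end.
apply: (IH _ L').
- case=> [i|[p q]] /=; first by case: ifP => _; [apply: Hc|apply: cone_c0].
  case: ifP => [/andP [hp hq]|_]; last by apply: cone_c0.
  apply: cone_comb; [lra|lra|apply: Hc|apply: Hc].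
- move=> j u hu; case: j => [i|[p q]] /=.
    case: ifP => [/eqP h|_] //; case: (eqVneq u v) => [->//|huv].
    by apply: Hs; rewrite inE negb_or huv.
  case: ifP => // _ /=; case: (eqVneq u v) => [->|huv]; first by rewrite mulNr mulrC addNr.
  by rewrite (Hs p u) ?(Hs q u) ?inE ?negb_or ?huv // !mulr0 addr0.
move=> [x' Hx']; apply: Hinf.
pose S i := \sum_u (L i).1 u * x' u.
pose bnd i := x' v + ((L i).2 - S i) / (L i).1 v.
have Hlu : forall a b', a \in [seq bnd q | q <- enum I & (L q).1 v < 0] ->
    b' \in [seq bnd p | p <- enum I & 0 < (L p).1 v] -> a <= b'.
  move=> a b' /mapP [q] ; rewrite mem_filter => /andP [hq _] -> /mapP [p].
  rewrite mem_filter => /andP [hp _] ->.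
  have := Hx' (inr (p, q)); rewrite /= hp hq /sat /=.
  have -> : \sum_u (- (L q).1 v * (L p).1 u + (L p).1 v * (L q).1 u) * x' u =
     - (L q).1 v * S p + (L p).1 v * S q.
    rewrite /S !mulr_sumr -big_split /=; apply: eq_bigr => u _; lra.
  rewrite /bnd => H.
  set al := (L p).1 v in hp H *; set be := (L q).1 v in hq H *.
  set X := ((L p).2 - S p) / al; set Y := ((L q).2 - S q) / be.
  have hX : al * X = (L p).2 - S p by rewrite /X mulrC divfK // gt_eqF.
  have hY : be * Y = (L q).2 - S q by rewrite /Y mulrC divfK // lt_eqF.
  rewrite lerD2l -subr_ge0.
  have h1 : al * (- be) * (X - Y) = - be * (al * X) + al * (be * Y) by ring.
  have h2 : 0 <= al * (- be) * (X - Y) by rewrite h1 hX hY; lra.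
  by rewrite pmulr_rge0 // in h2; apply: mulr_gt0; lra.
have [t [Ht1 Ht2]] := interpol Hlu.
exists (upd x' v t) => i; rewrite /sat dot_upd -/(S i).
case: (ltgtP ((L i).1 v) 0) => hi.
- have H : bnd i <= t by apply: Ht1; apply: map_f; rewrite mem_filter hi mem_enum.
  rewrite /bnd in H.
  set al := (L i).1 v in hi H *.
  set X := ((L i).2 - S i) / al in H *.
  have hX : al * X = (L i).2 - S i by rewrite /X mulrC divfK // lt_eqF.
  have h : 0 <= (- al) * (t - x' v - X) by apply: mulr_ge0; lra.
  have e : (- al) * (t - x' v - X) = - (al * (t - x' v)) + al * X by ring.
  lra.
- have H : t <= bnd i by apply: Ht2; apply: map_f; rewrite mem_filter hi mem_enum.
  rewrite /bnd in H.
  set al := (L i).1 v in hi H *.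
  set X := ((L i).2 - S i) / al in H *.
  have hX : al * X = (L i).2 - S i by rewrite /X mulrC divfK // gt_eqF.
  have h : 0 <= al * (x' v + X - t) by apply: mulr_ge0; lra.
  have e : al * (x' v + X - t) = - (al * (t - x' v)) + al * X by ring.
  lra.
- have := Hx' (inl i); rewrite /= hi eqxx /sat -/(S i) mul0r addr0 //.
Qed.

Lemma farkas : ~ (exists x, forall k, \sum_v A k v * x v <= bv k) ->
  exists y : C -> R, (forall k, 0 <= y k) /\ (forall v, \sum_k y k * A k v = 0)
    /\ \sum_k y k * bv k < 0.
Proof.
move=> Hinf.
have [bb [hbb [y [yp [ya yb]]]]] : exists bb, bb < 0 /\ cone_ok ((fun _ => 0), bb).
  apply: (@FM (enum V) C (fun k => (A k, bv k))).
- move=> k; exists (fun j => if j == k then 1 else 0); split => [j|].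
    by case: ifP.
  split => [v|] /=; rewrite (bigD1 k) //= eqxx mul1r big1 ?addr0 // => j /negbTE ->;
  by rewrite mul0r.
- by move=> i v; rewrite mem_enum.
- by move=> [x Hx]; apply: Hinf; exists x.
by exists y; split => //; split => [v|]; [rewrite -ya | rewrite -yb].
Qed.

Lemma farkas1 (k0 : C) (xs : V -> R) :
  (forall k, k != k0 -> \sum_v A k v * xs v <= bv k) ->
  ~ (exists x, forall k, \sum_v A k v * x v <= bv k) ->
  exists y : C -> R, (forall k, 0 <= y k) /\ y k0 = 1 /\
    (forall v, \sum_k y k * A k v = 0) /\ \sum_k y k * bv k < 0.
Proof.
move=> Hxs /farkas [y [yp [ya yb]]].
have key : \sum_k y k * (\sum_v A k v * xs v) = 0.
  under eq_bigr do rewrite mulr_sumr.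
  rewrite exchange_big big1 // => v _.
  transitivity (xs v * \sum_k y k * A k v); last by rewrite ya mulr0.
  by rewrite mulr_sumr; apply: eq_bigr => k _; lra.
have y0 : 0 < y k0.
  rewrite lt_def yp andbT; apply/negP => /eqP h0.
  have : \sum_k y k * (\sum_v A k v * xs v) <= \sum_k y k * bv k.
    apply: ler_sum => k _; case: (eqVneq k k0) => [->|hk]; first by rewrite h0 !mul0r.
    by apply: ler_wpM2l => //; apply: Hxs.
  lra.
exists (fun k => y k / y k0); split => [k|]; first by apply: divr_ge0.
split; first by rewrite divff // gt_eqF.
split => [v|].
  transitivity ((\sum_k y k * A k v) / y k0); last by rewrite ya mul0r.
  by rewrite mulr_suml; apply: eq_bigr => k _; lra.
rewrite -[X in _ < X](mul0r (y k0)^-1).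
have -> : \sum_k y k / y k0 * bv k = (\sum_k y k * bv k) / y k0.
  by rewrite mulr_suml; apply: eq_bigr => k _; lra.
by rewrite ltr_pM2r ?invr_gt0.
Qed.

End Farkas.

Section Core.
Variables (R : realType) (N M : nat) (h : 'I_M -> R) (D : 'I_M -> 'I_N.-1 -> R)
  (gbar cN vl vu s : 'I_N.-1 -> R).

Lemma ident ll lu beta eta theta (w : 'I_N.-1 -> R) :
  eqcons h D gbar ll lu beta eta theta -> sumv w = 1 ->
  dotv w gbar = dotv ll w - dotv lu w - beta + dotv eta w
                - \sum_(m < M) theta m * h m * dotv w (D m).
Proof.
move=> E sw.
have hT : \sum_(m < M) theta m * h m * dotv w (D m) =
          \sum_i w i * \sum_(m < M) theta m * h m * D m i.
  rewrite /dotv; under eq_bigr do rewrite mulr_sumr.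
  rewrite exchange_big; apply: eq_bigr => i _; rewrite mulr_sumr.
  by apply: eq_bigr => m _; ring.
have hb : beta = \sum_i w i * beta by rewrite -mulr_suml -/(sumv w) sw mul1r.
rewrite hT {1}hb /dotv -!sumrN -!big_split /=; apply: eq_bigr => i _.
have -> : gbar i = ll i - lu i - beta + eta i - \sum_(m < M) theta m * h m * D m i.
  by have := E i; lra.
ring.
Qed.


Local Open Scope ereal_scope.

Lemma LleP : hatV h D cN -> (Lval h D gbar cN vl vu s <= Pval h D gbar cN vl vu s)%E.
Proof.
move=> [hc0 [hc1 hcm]].
apply: le_ereal_inf_tmp => _ [w [P [[hw0 [hw1 hwm]] [hP [hb ->]]]]].
apply: ge_ereal_sup => _ [ll [lu [beta [eta [theta [E [hll [hlu [heta [hth ->]]]]]]]]]].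
set S := [set _ | P in _].
have hin : S (\sum_(i < N.-1) rowdot P s i * - (ll i * vl i + lu i * vu i))%:E.
  by exists P.
apply: le_trans (leeD (lexx _) (ereal_inf_lbound hin)) _.
rewrite -EFinD lee_fin.
rewrite (ident E hw1) (ident E hc1).
have h1 : (0 <= dotv eta w)%R by apply: sumr_ge0 => i _; apply: mulr_ge0.
have h2 : (\sum_(m < M) theta m * h m * dotv w (D m) <= 0)%R.
  by apply: sumr_le0 => m _; rewrite -mulrA; apply: mulr_ge0_le0.
suff h3 : (dotv ll cN - dotv lu cN +
   \sum_(i < N.-1) rowdot P s i * - (ll i * vl i + lu i * vu i) <= dotv ll w - dotv lu w)%R.
  lra.
rewrite /dotv -!sumrN -!big_split /=; apply: ler_sum => i _.
have t1 : (0 <= ll i * (w i - cN i + rowdot P s i * vl i))%R.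
  by apply: mulr_ge0 => //; have := hb i; lra.
have t2 : (0 <= lu i * (cN i + rowdot P s i * vu i - w i))%R.
  by apply: mulr_ge0 => //; have := hb i; lra.
have e : (ll i * w i - lu i * w i - (ll i * cN i - lu i * cN i +
   rowdot P s i * - (ll i * vl i + lu i * vu i)) =
   ll i * (w i - cN i + rowdot P s i * vl i) + lu i * (cN i + rowdot P s i * vu i - w i))%R.
  by ring.
lra.
Qed.


Lemma DleL : (Dval h D gbar cN vl vu s <= Lval h D gbar cN vl vu s)%E.
Proof.
apply: ge_ereal_sup => _ [ll [lu [eta [taul [tauu [beta [theta [Th
   [E [Hc [hll [hlu [heta [hth [hTh ->]]]]]]]]]]]]]]].
eapply le_trans; last first.
  apply: ereal_sup_ubound.
  exists ll, lu, beta, eta, theta; do 5 (split => //).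
have -> : (dotv cN gbar + \sum_(m < M) theta m * h m * dotv cN (D m) - dotv eta cN
   - \sum_(i < N.-1) \sum_(j < N.-1) Th i j - sumv taul - sumv tauu)%R =
   ((dotv cN gbar - dotv eta cN + \sum_(m < M) theta m * h m * dotv cN (D m)) +
   (- \sum_(i < N.-1) \sum_(j < N.-1) Th i j - sumv taul - sumv tauu))%R.
  by ring.
rewrite EFinD; apply: leeD => //.
apply: le_ereal_inf_tmp => _ [P [hP01 [hPr hPc]] <-]; rewrite lee_fin.
have e1 : (\sum_(i < N.-1) rowdot P s i * - (ll i * vl i + lu i * vu i) =
   \sum_i \sum_j P i j * ((- (ll i * vl i) - lu i * vu i) * s j))%R.
  apply: eq_bigr => i _; rewrite /rowdot mulr_suml; apply: eq_bigr => j _; ring.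
have e2 : (\sum_i \sum_j P i j * (- taul i - tauu j - Th i j) =
   - sumv taul - sumv tauu - \sum_i \sum_j P i j * Th i j)%R.
  have a1 : (\sum_i \sum_j P i j * taul i = sumv taul)%R.
    apply: eq_bigr => i _; rewrite -mulr_suml hPr; ring.
  have a2 : (\sum_i \sum_j P i j * tauu j = sumv tauu)%R.
    rewrite exchange_big; apply: eq_bigr => j _; rewrite -mulr_suml hPc; ring.
  rewrite -a1 -a2 -!sumrN -!big_split /=; apply: eq_bigr => i _.
  rewrite -!sumrN -!big_split /=; apply: eq_bigr => j _; ring.
have e3 : (\sum_i \sum_j P i j * Th i j <= \sum_(i < N.-1) \sum_(j < N.-1) Th i j)%R.
  apply: ler_sum => i _; apply: ler_sum => j _; apply: ler_piMl => //.
  by have := hP01 i j => /andP [].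
rewrite e1; apply: le_trans (_ : _ <= \sum_i \sum_j P i j * (- taul i - tauu j - Th i j))%R _.
  rewrite e2; lra.
apply: ler_sum => i _; apply: ler_sum => j _; apply: ler_wpM2l.
  by have := hP01 i j => /andP [].
have := Hc i j; lra.
Qed.


Local Close Scope ereal_scope.

Lemma sum_delta (T : finType) (a : T) (G : T -> R) :
  (forall t, t != a -> G t = 0) -> \sum_t G t = G a.
Proof. by move=> H; rewrite (bigD1 a) //= big1 ?addr0. Qed.
Arguments sum_delta {T} a {G}.

Lemma sum_pair (I J : finType) (G : I * J -> R) :
  \sum_(p : I * J) G p = \sum_(i : I) \sum_(j : J) G (i, j).
Proof. by rewrite pair_bigA; apply: eq_bigr => -[i j]. Qed.

Definition sg (bb : bool) : R := if bb then 1 else -1.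

Definition VT := ('I_N.-1 + 'I_N.-1 * 'I_N.-1)%type.
Definition CT := ('I_N.-1 + (bool + ('I_M + ('I_N.-1 * 'I_N.-1 + (bool * 'I_N.-1 +
   (bool * 'I_N.-1 + ('I_N.-1 + ('I_N.-1 + unit))))))))%type.

Definition Amat (k : CT) (v : VT) : R :=
  match k with
  | inl i => match v with inl i' => if i' == i then -1 else 0 | inr _ => 0 end
  | inr (inl bb) => match v with inl _ => sg bb | inr _ => 0 end
  | inr (inr (inl m)) => match v with inl i' => h m * D m i' | inr _ => 0 end
  | inr (inr (inr (inl ij))) =>
      match v with inl _ => 0 | inr ij' => if ij' == ij then -1 else 0 end
  | inr (inr (inr (inr (inl (bb, i))))) =>
      match v with inl _ => 0 | inr ij' => if ij'.1 == i then sg bb else 0 end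
  | inr (inr (inr (inr (inr (inl (bb, j)))))) =>
      match v with inl _ => 0 | inr ij' => if ij'.2 == j then sg bb else 0 end
  | inr (inr (inr (inr (inr (inr (inl i)))))) =>
      match v with inl i' => if i' == i then -1 else 0
                 | inr ij' => if ij'.1 == i then - (s ij'.2 * vl i) else 0 end
  | inr (inr (inr (inr (inr (inr (inr (inl i))))))) =>
      match v with inl i' => if i' == i then 1 else 0
                 | inr ij' => if ij'.1 == i then - (s ij'.2 * vu i) else 0 end
  | inr (inr (inr (inr (inr (inr (inr (inr _))))))) =>
      match v with inl i' => gbar i' | inr _ => 0 end
  end.

Definition bvec (r : R) (k : CT) : R :=
  match k with
  | inl i => 0
  | inr (inl bb) => sg bb
  | inr (inr (inl m)) => 0
  | inr (inr (inr (inl ij))) => 0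
  | inr (inr (inr (inr (inl (bb, i))))) => sg bb
  | inr (inr (inr (inr (inr (inl (bb, j)))))) => sg bb
  | inr (inr (inr (inr (inr (inr (inl i)))))) => - cN i
  | inr (inr (inr (inr (inr (inr (inr (inl i))))))) => cN i
  | inr (inr (inr (inr (inr (inr (inr (inr _))))))) => r
  end.

Definition wof (x : VT -> R) (i : 'I_N.-1) := x (inl i).
Definition Pof (x : VT -> R) (i j : 'I_N.-1) := x (inr (i, j)).

Definition rowval (k : CT) (x : VT -> R) : R :=
  match k with
  | inl i => - x (inl i)
  | inr (inl bb) => sg bb * sumv (wof x)
  | inr (inr (inl m)) => h m * dotv (wof x) (D m)
  | inr (inr (inr (inl ij))) => - x (inr ij)
  | inr (inr (inr (inr (inl (bb, i))))) => sg bb * \sum_j Pof x i j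
  | inr (inr (inr (inr (inr (inl (bb, j)))))) => sg bb * \sum_i Pof x i j
  | inr (inr (inr (inr (inr (inr (inl i)))))) => - x (inl i) - rowdot (Pof x) s i * vl i
  | inr (inr (inr (inr (inr (inr (inr (inl i))))))) => x (inl i) - rowdot (Pof x) s i * vu i
  | inr (inr (inr (inr (inr (inr (inr (inr _))))))) => dotv (wof x) gbar
  end.

Lemma sumV (F : VT -> R) : \sum_(v : VT) F v =
  \sum_i F (inl i) + \sum_i \sum_j F (inr (i, j)).
Proof. by rewrite big_sumType /= sum_pair. Qed.

Lemma rowE k x : \sum_v Amat k v * x v = rowval k x.
Proof.
rewrite sumV.
case: k => [i|[bb|[m|[[i j]|[[bb i]|[[bb j]|[i|[i|[]]]]]]]]] /=.
- rewrite (sum_delta i) ?eqxx; last by move=> t /negbTE ->; rewrite mul0r.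
  by rewrite [X in _ + X]big1 ?addr0 ?mulN1r // => a _; rewrite big1 // => b _; rewrite mul0r.
- rewrite [X in _ + X]big1 ?addr0; last by move=> a _; rewrite big1 // => b _; rewrite mul0r.
  by rewrite /sumv mulr_sumr.
- rewrite [X in _ + X]big1 ?addr0; last by move=> a _; rewrite big1 // => b _; rewrite mul0r.
  by rewrite /dotv /wof mulr_sumr; apply: eq_bigr => a _; ring.
- rewrite big1 ?add0r; last by move=> a _; rewrite mul0r.
  rewrite (sum_delta i); last first.
    move=> a /negbTE hai; rewrite big1 // => b _.
    by case: ifP => [/eqP [] /eqP|]; rewrite ?hai ?mul0r.
  rewrite (sum_delta j) ?eqxx ?mulN1r //.
  move=> b hb; case: ifP => [/eqP [] hbj|]; last by rewrite mul0r.
  by rewrite hbj eqxx in hb.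
- rewrite big1 ?add0r; last by move=> a _; rewrite mul0r.
  rewrite (sum_delta i) /=; last first.
    by move=> a /negbTE hai; rewrite big1 // => b _; rewrite hai mul0r.
  by rewrite eqxx mulr_sumr.
- rewrite big1 ?add0r; last by move=> a _; rewrite mul0r.
  rewrite exchange_big (sum_delta j) /=; last first.
    by move=> a /negbTE hai; rewrite big1 // => b _; rewrite hai mul0r.
  by rewrite eqxx mulr_sumr.
- rewrite (sum_delta i) ?eqxx; last by move=> t /negbTE ->; rewrite mul0r.
  rewrite (sum_delta i) /= ?eqxx; last first.
    by move=> a /negbTE hai; rewrite big1 // => b _; rewrite hai mul0r.
  rewrite /rowdot mulr_suml -sumrN; congr (_ + _); first by ring.
  by apply: eq_bigr => j _; rewrite /Pof; ring.
- rewrite (sum_delta i) ?eqxx; last by move=> t /negbTE ->; rewrite mul0r.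
  rewrite (sum_delta i) /= ?eqxx; last first.
    by move=> a /negbTE hai; rewrite big1 // => b _; rewrite hai mul0r.
  rewrite /rowdot mulr_suml -sumrN; congr (_ + _); first by ring.
  by apply: eq_bigr => j _; rewrite /Pof; ring.
- rewrite [X in _ + X]big1 ?addr0; last by move=> a _; rewrite big1 // => b _; rewrite mul0r.
  by rewrite /dotv; apply: eq_bigr => a _; rewrite /wof mulrC.
Qed.


Lemma sum_ifE (T : finType) (a : T) (F G : T -> R) :
  \sum_t F t * (if a == t then G t else 0) = F a * G a.
Proof.
rewrite (sum_delta a) ?eqxx // => t; rewrite eq_sym => /negbTE -> /=.
by rewrite mulr0.
Qed.

Lemma sumr_mul0 (T : finType) (F : T -> R) : \sum_t F t * 0 = 0.
Proof. by rewrite big1 // => t _; rewrite mulr0. Qed.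
Lemma sumr2_mul0 (T U : finType) (F : T -> U -> R) : \sum_t \sum_u F t u * 0 = 0.
Proof. by rewrite big1 // => t _; rewrite sumr_mul0. Qed.
Lemma sumr_mul1 (T : finType) (F : T -> R) : \sum_t F t * 1 = \sum_t F t.
Proof. by apply: eq_bigr => t _; rewrite mulr1. Qed.
Lemma sumr_mulN1 (T : finType) (F : T -> R) : \sum_t F t * -1 = - \sum_t F t.
Proof. by rewrite -sumrN; apply: eq_bigr => t _; rewrite mulrN1. Qed.
Lemma sumr_mulN (T : finType) (F G : T -> R) : \sum_t F t * - G t = - \sum_t F t * G t.
Proof. by rewrite -sumrN; apply: eq_bigr => t _; rewrite mulrN. Qed.

Definition kEta i : CT := inl i.
Definition kB bb : CT := inr (inl bb).
Definition kTh m : CT := inr (inr (inl m)).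
Definition kXi p : CT := inr (inr (inr (inl p))).
Definition kRow p : CT := inr (inr (inr (inr (inl p)))).
Definition kCol p : CT := inr (inr (inr (inr (inr (inl p))))).
Definition kLl i : CT := inr (inr (inr (inr (inr (inr (inl i)))))).
Definition kLu i : CT := inr (inr (inr (inr (inr (inr (inr (inl i))))))).
Definition kObj : CT := inr (inr (inr (inr (inr (inr (inr (inr tt))))))).

Lemma sum_unit (G : unit -> R) : \sum_t G t = G tt.
Proof. by rewrite (sum_delta tt) // => -[]. Qed.

Lemma colW (y : CT -> R) i : \sum_k y k * Amat k (inl i) =
  - y (kEta i) + (y (kB true) - y (kB false)) + \sum_m y (kTh m) * (h m * D m i)
  - y (kLl i) + y (kLu i) + y kObj * gbar i.
Proof.
rewrite !big_sumType /= big_bool sum_unit /=.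
rewrite (sum_delta i) ?eqxx; last by move=> t /negbTE; rewrite eq_sym => -> /=; rewrite mulr0.
rewrite [X in _ + (_ + (_ + (X + _)))]big1; last by move=> a _; rewrite mulr0.
rewrite [X in _ + (_ + (_ + (_ + (X + _))))]big1; last by move=> [bb a] _; rewrite mulr0.
rewrite [X in _ + (_ + (_ + (_ + (_ + (X + _)))))]big1; last by move=> [bb a] _; rewrite mulr0.
rewrite [X in _ + (_ + (_ + (_ + (_ + (_ + (X + _))))))](sum_delta i) ?eqxx;
  last by move=> t /negbTE; rewrite eq_sym => -> /=; rewrite mulr0.
rewrite [X in _ + (_ + (_ + (_ + (_ + (_ + (_ + (X + _)))))))](sum_delta i) ?eqxx;
  last by move=> t /negbTE; rewrite eq_sym => -> /=; rewrite mulr0.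
rewrite /kEta /kB /kTh /kLl /kLu /kObj /sg; ring.
Qed.

Lemma colP (y : CT -> R) i j : \sum_k y k * Amat k (inr (i, j)) =
  - y (kXi (i, j)) + (y (kRow (true, i)) - y (kRow (false, i)))
  + (y (kCol (true, j)) - y (kCol (false, j)))
  - y (kLl i) * (s j * vl i) - y (kLu i) * (s j * vu i).
Proof.
rewrite !big_sumType /= sum_unit /=.
rewrite [X in X + _]big1; last by move=> a _; rewrite mulr0.
rewrite [X in _ + (X + _)]big1; last by move=> a _; rewrite mulr0.
rewrite [X in _ + (_ + (X + _))]big1; last by move=> a _; rewrite mulr0.
rewrite [X in _ + (_ + (_ + (X + _)))](sum_delta (i, j)) ?eqxx;
  last by move=> t /negbTE; rewrite eq_sym => -> /=; rewrite mulr0.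
rewrite !sum_pair !big_bool /= !sum_ifE.
rewrite /kXi /kRow /kCol /kLl /kLu /sg; ring.
Qed.

Lemma rhsE (y : CT -> R) r : \sum_k y k * bvec r k =
  (y (kB true) - y (kB false)) + \sum_i (y (kRow (true, i)) - y (kRow (false, i)))
  + \sum_j (y (kCol (true, j)) - y (kCol (false, j)))
  - \sum_i y (kLl i) * cN i + \sum_i y (kLu i) * cN i + y kObj * r.
Proof.
rewrite !big_sumType /= sum_unit /= !sum_pair !big_bool /=.
rewrite sumr2_mul0 !sumr_mul0 !sumr_mul1 !sumr_mulN1 !sumr_mulN.
rewrite !big_split /= !sumrN /kB /kRow /kCol /kLl /kLu /kObj; ring.
Qed.


Lemma approx (a b : \bar R) : (forall r : R, (r%:E < a)%E -> (r%:E <= b)%E) -> (a <= b)%E.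
Proof.
move=> H; case: a H => [a| |] H; last by rewrite leNye.
- case: b H => [b| |] H; last 2 first.
  + by rewrite leey.
  + by have := H (a - 1); rewrite lte_fin ltrBlDr ltrDl ltr01 => /(_ isT).
  rewrite lee_fin leNgt; apply/negP => hba.
  have := H ((a + b) / 2); rewrite !lte_fin lee_fin.
  have h1 : (a + b) / 2 < a by lra.
  have h2 : ~ ((a + b) / 2 <= b) by lra.
  by move=> /(_ h1).
- case: b H => [b| |] H; last 2 first.
  + by rewrite lexx.
  + by have := H 0; rewrite ltry leeNy_eq => /(_ isT).
  by have := H (b + 1); rewrite ltry lee_fin => /(_ isT) hb; exfalso; lra.
Qed.

Lemma PleD : hatV h D cN -> (forall i, 0 <= vl i) -> (forall i, 0 <= vu i) ->
  (forall j, 0 <= s j) -> (Pval h D gbar cN vl vu s <= Dval h D gbar cN vl vu s)%E.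
Proof.
move=> [hc0 [hc1 hcm]] hvl hvu hs.
apply: approx => r hr.
have Hinf : ~ (exists x, forall k, \sum_v Amat k v * x v <= bvec r k).
  move=> [x hx].
  have hk : forall k, rowval k x <= bvec r k by move=> k; rewrite -rowE.
  have hw0 : forall i, 0 <= wof x i by move=> i; have := hk (kEta i); rewrite /= /wof; lra.
  have hw1 : sumv (wof x) = 1.
    by have := hk (kB true); have := hk (kB false); rewrite /= /sg; lra.
  have hP0 : forall i j, 0 <= Pof x i j.
    by move=> i j; have := hk (kXi (i, j)); rewrite /= /Pof; lra.
  have hPr : forall i, \sum_j Pof x i j = 1.
    by move=> i; have := hk (kRow (true, i)); have := hk (kRow (false, i)); rewrite /= /sg; lra.
  have hPc : forall j, \sum_i Pof x i j = 1.
    by move=> j; have := hk (kCol (true, j)); have := hk (kCol (false, j)); rewrite /= /sg; lra.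
  have hin : [set y | exists w P, hatV h D w /\ Sset P /\
     (forall i, (- (rowdot P s i * vl i) <= w i - cN i
                 <= rowdot P s i * vu i)%R) /\
     y = (dotv w gbar)%:E] (dotv (wof x) gbar)%:E.
    exists (wof x), (Pof x); split; first by split => //; split => // m; exact: (hk (kTh m)).
    split.
      split => [i j|]; last by split.
      rewrite hP0 /=; rewrite -(hPr i) (bigD1 j) //= lerDl.
      by apply: sumr_ge0 => k _.
    split => // i; have := hk (kLl i); have := hk (kLu i); rewrite /= /wof => h1 h2.
    by apply/andP; split; lra.
  have := ereal_inf_lbound hin; rewrite -/(Pval h D gbar cN vl vu s) => hle.
  have hobj := hk kObj; rewrite /= in hobj.
  have h3 : ((dotv (wof x) gbar)%:E <= r%:E)%E by rewrite lee_fin.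
  by have := lt_le_trans hr (le_trans hle h3); rewrite ltxx.
pose xs (v : VT) : R := match v with inl i => cN i | inr (i, j) => if i == j then 1 else 0 end.
have rd : forall i, rowdot (Pof xs) s i = s i.
  by move=> i; rewrite /rowdot /Pof /= (sum_delta i) ?eqxx ?mul1r // => t; rewrite eq_sym => /negbTE -> ; rewrite mul0r.
have Hxs : forall k, k != kObj -> \sum_v Amat k v * xs v <= bvec r k.
  move=> k; rewrite rowE.
  case: k => [i|[bb|[m|[[i j]|[[bb i]|[[bb j]|[i|[i|[]]]]]]]]] //= _.
  all: first [ by rewrite oppr_le0
             | by rewrite /wof hc1 mulr1
             | exact: hcm
             | by rewrite oppr_le0; case: ifP
             | (rewrite /Pof /= (sum_delta i) ?eqxx ?mulr1 // => t;
                by rewrite eq_sym => /negbTE ->)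
             | (rewrite /Pof /= (sum_delta j) ?eqxx ?mulr1 // => t;
                by move=> /negbTE ->)
             | (rewrite rd gerDl oppr_le0; exact: mulr_ge0)
             | idtac ].
have [y [yp [y1 [ya yb]]]] := farkas1 Hxs Hinf.
rewrite rhsE y1 mul1r in yb.
pose ll i := y (kLl i). pose lu i := y (kLu i). pose eta i := y (kEta i).
pose taul i := y (kRow (true, i)) - y (kRow (false, i)).
pose tauu j := y (kCol (true, j)) - y (kCol (false, j)).
pose beta := y (kB true) - y (kB false).
pose theta m := y (kTh m).
have E : eqcons h D gbar ll lu beta eta theta.
  move=> i; have := ya (inl i); rewrite colW y1 mul1r => H0.
  rewrite /ll /lu /eta /beta /theta.
  have -> : \sum_(m < M) y (kTh m) * h m * D m i = \sum_(m < M) y (kTh m) * (h m * D m i).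
    by apply: eq_bigr => m _; rewrite mulrA.
  lra.
apply: le_trans (ereal_sup_ubound _); last first.
  exists ll, lu, eta, taul, tauu, beta, theta, (fun _ _ => 0).
  split; first exact: E.
  split.
    move=> i j; have := ya (inr (i, j)); rewrite colP => H0.
    apply: (le_trans (yp (kXi (i, j)))); rewrite le_eqVlt; apply/orP; left; apply/eqP.
    rewrite -[LHS]addr0 -{1}H0 /ll /lu /taul /tauu; ring.
  do 4 (split; first by move=> ?; apply: yp).
  split; first by move=> ? ?.
  reflexivity.
rewrite lee_fin.
have := ident E hc1 => hid.
have -> : \sum_(i < N.-1) \sum_(j < N.-1) (fun=> fun=> 0 : R) i j = 0 :> R.
  by rewrite big1 // => i _; rewrite big1.
move: hid yb; rewrite /dotv /sumv /ll /lu /taul /tauu /beta.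
lra.
Qed.

End Core.

Section Aux.
Variables (R : realType) (k : nat).

Lemma Rmap_widen (v : 'I_k -> R) (i : 'I_k) :
  @Rmap R k.+2 v (widen_ord (leqnSn k) i) = v i.
Proof.
rewrite /Rmap; case: insubP => [j _ hj|]; last by rewrite /= ltn_ord.
by congr v; apply: val_inj; rewrite hj.
Qed.

Lemma Rmap_max (v : 'I_k -> R) : @Rmap R k.+2 v ord_max = 1 - sumv v.
Proof. by rewrite /Rmap; case: insubP => [j /= |//]; rewrite ltnn. Qed.

Lemma Rmap_sum (v : 'I_k -> R) : sumv (@Rmap R k.+2 v) = 1.
Proof.
rewrite /sumv big_ord_recr /= Rmap_max.
under eq_bigr do rewrite Rmap_widen.
rewrite -/(sumv v); lra.
Qed.

Lemma Rmap_bnd (v : 'I_k -> R) (i : 'I_k.+1) : (forall j, 0 <= v j) -> sumv v <= 1 ->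
  0 <= @Rmap R k.+2 v i <= 1.
Proof.
move=> h0 h1; rewrite /Rmap; case: insubP => [j _ _|_].
  rewrite h0 /=; apply: le_trans h1; rewrite /sumv (bigD1 j) //= lerDl.
  by apply: sumr_ge0.
have : 0 <= sumv v by apply: sumr_ge0.
move=> hs; apply/andP; split; lra.
Qed.

End Aux.

Unset Implicit Arguments. Set Strict Implicit.

Theorem theorem3 (R : realType) (N : nat) (x : nat -> R) (n K : nat)
  (z : 'I_n -> R) (xi : 'I_K -> 'I_n -> R) (M : nat)
  (r1 r2 r3 p h : 'I_M -> R) (c : 'I_N.-2 -> R) (gamma : R) :
  (3 <= N)%N ->
  (forall i j : nat, (i < j)%N -> (j < N)%N -> x i < x j) ->
  (0 < K)%N ->
  (forall k, x 0%N <= dotv z (xi k) <= x N.-1) ->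
  (1 <= M)%N ->
  (forall m, r1 m <= r3 m) ->
  (forall m, x 0%N <= r1 m <= x N.-1) ->
  (forall m, x 0%N <= r2 m <= x N.-1) ->
  (forall m, x 0%N <= r3 m <= x N.-1) ->
  (forall m, 0 <= p m <= 1) ->
  (forall m, h m = 1 \/ h m = -1) ->
  let D := @Delta R N x M p r1 r2 r3 in
  nonempty_interior (Vset h D) ->
  is_analytic_center h D c ->
  0 < gamma <= 1 ->
  let gbar : 'I_N.-1 -> R :=
    fun j => K%:R^-1 * \sum_(k < K) @gvec R N x (dotv z (xi k)) j in
  let cN := Rmap c in
  let vl := vlow h D c in
  let vu := vup h D c in
  let s := @sigmav R N gamma in
  Pval h D gbar cN vl vu s = Dval h D gbar cN vl vu s /\
  Lval h D gbar cN vl vu s = Dval h D gbar cN vl vu s.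
Proof.
move=> hN _ _ _ _ _ _ _ _ _ _ D _ [[hc0 [hc1 hcm]] _] hg gbar cN vl vu s.
have [k hk] : exists k, N = k.+2 by exists N.-2; case: N hN {c D gbar cN vl vu s hc0 hc1 hcm} => [|[|N']].
subst N.
have cV : Vset h D c.
  split; first by move=> i; apply: ltW.
  by split; [apply: ltW | move=> m; apply: ltW].
have hcN : hatV h D cN.
  split; first by move=> i; have /andP [] := @Rmap_bnd R k c i (fun j => ltW (hc0 j)) (ltW hc1).
  by split; [apply: Rmap_sum | move=> m; apply: ltW].
have hE : forall i, [set Rmap v i - Rmap c i | v in Vset h D] 0.
  by move=> i; exists c => //; rewrite subrr.
have hbnd : forall i v, Vset h D v -> 0 <= @Rmap R k.+2 v i <= 1.
  by move=> i v [h0 [h1 _]]; apply: (@Rmap_bnd R k).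
have hvu : forall i, 0 <= vu i.
  move=> i; apply: ub_le_sup; last exact: hE.
  exists 1 => _ [v hv <-]; have := hbnd i v hv; have := hbnd i c cV; lra.
have hvl : forall i, 0 <= vl i.
  move=> i; rewrite /vl /vlow oppr_ge0; apply: ge_inf; last exact: hE.
  exists (-1) => _ [v hv <-]; have := hbnd i v hv; have := hbnd i c cV; lra.
have hs : forall j, 0 <= s j.
  move=> j; rewrite /s /sigmav /varsigma; apply: divr_ge0; apply: mulr_ge0;
    rewrite ?powR_ge0 //; case/andP: hg => g0 _; exact: ltW.
have h1 := PleD gbar hcN hvl hvu hs.
have h2 := DleL h D gbar cN vl vu s.
have h3 := LleP gbar vl vu s hcN.
split; apply: le_anti; rewrite ?h1 ?h2 //=.
- by rewrite (le_trans h2 h3).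
- by rewrite (le_trans h3 h1).
Qed.
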